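(* Let $\mathcal C$ be a set of cycles and $m\ge1$. There exists a nonsingular $m$-stage FSR $f$ with $\Omega(f)=\mathcal C$ if and only if (i) $\sum_{c\in\mathcal C}\mathrm{per}(c)=2^m$, and (ii) the map $v\mapsto \mathrm{lbit}_m(v)$ is injective on $\bigcup_{c\in\mathcal C}\Omega_{m+1}(c)$.
   Context: An $m$-stage FSR with feedback logic $f_1:\{0,1\}^m\to\{0,1\}$ has state transformation $F(x_0,\dots,x_{m-1})=(x_1,\dots,x_{m-1},f_1(x_0,\dots,x_{m-1}))$ and generates the binary sequences $s:\mathbb Z\to\{0,1\}$ with $s(t+m)=f_1(s(t),\dots,s(t+m-1))$ for all $t$; it is nonsingular if $F$ is bijective. A periodic sequence $s$ of least period $p$ determines the cycle $[s(0),\dots,s(p-1)]$ (shifts of $s$ give the same cycle), with $\mathrm{per}(c)=p$. The cycle structure $\Omega(f)$ is the set of cycles of the sequences generated by $f$. For a cycle $c$ given by $s$ with period $p$, $\Omega_k(c)=\{(s(i),s((i+1)\bmod p),\dots,s((i+k-1)\bmod p)):0\le i<p\}\subseteq\{0,1\}^k$. For $v=(a_1,\dots,a_{m+1})$, $\mathrm{lbit}_m(v)=(a_2,\dots,a_{m+1})$ (last $m$ coordinates). *)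

(* Defs.v *)
From mathcomp Require Import all_boot all_order all_algebra.
Set Implicit Arguments. Unset Strict Implicit. Unset Printing Implicit Defensive.
Import GRing.Theory Num.Theory.

Definition window (m : nat) (s : int -> bool) (t : int) : m.-tuple bool :=
  [tuple s (t + Posz i)%R | i < m].

(* State transformation F(x_0..x_{m-1}) = (x_1, .., x_{m-1}, f1(x_0..x_{m-1})). *)
Definition fsr_step (m : nat) (f : m.-tuple bool -> bool) (x : m.-tuple bool)
  : m.-tuple bool :=
  [tuple nth (f x) (tval x) i.+1 | i < m].

Definition nonsingular (m : nat) (f : m.-tuple bool -> bool) : Prop :=
  bijective (fsr_step f).

Definition generates (m : nat) (f : m.-tuple bool -> bool) (s : int -> bool) : Prop :=
  forall t : int, s (t + Posz m)%R = f (window m s t).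

Definition is_period (s : int -> bool) (p : nat) : Prop :=
  forall t : int, s (t + Posz p)%R = s t.

Definition least_period (s : int -> bool) (p : nat) : Prop :=
  (0 < p)%N /\ is_period s p /\ forall q : nat, (0 < q < p)%N -> ~ is_period s q.

(* A cycle is represented by a word [s(0),...,s(p-1)] (p the least period),
   i.e. a nonempty primitive word, words being identified up to rotation. *)
Definition cycle_word (s : int -> bool) (p : nat) : seq bool :=
  [seq s (Posz i) | i <- iota 0 p].

Definition is_cycle (w : seq bool) : bool :=
  (0 < size w)%N && all (fun q => rot q w != w) (iota 1 (size w).-1).

Definition same_cycle (u v : seq bool) : bool :=
  has (fun i => rot i u == v) (iota 0 (size u)).

Definition per (c : seq bool) : nat := size c.

Definition cycle_set (C : seq (seq bool)) : Prop :=
  all is_cycle C /\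
  forall i j, (i < size C)%N -> (j < size C)%N ->
    same_cycle (nth [::] C i) (nth [::] C j) -> i = j.

Definition in_Omega (m : nat) (f : m.-tuple bool -> bool) (c : seq bool) : Prop :=
  exists (s : int -> bool) (p : nat),
    generates f s /\ least_period s p /\ same_cycle (cycle_word s p) c.

Definition Omega_eq (m : nat) (f : m.-tuple bool -> bool) (C : seq (seq bool)) : Prop :=
  forall c, is_cycle c -> (in_Omega f c <-> has (same_cycle c) C).

Definition Omega_k (k : nat) (c : seq bool) : seq (seq bool) :=
  [seq [seq nth false c ((i + j) %% size c) | j <- iota 0 k] | i <- iota 0 (size c)].

Definition lbit (m : nat) (v : seq bool) : seq bool := drop (size v - m) v.

(* Main.v *)
Require Import Defs.
From mathcomp Require Import all_boot all_order all_algebra.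
From mathcomp Require Import zify.
From Stdlib Require Import Classical FunctionalExtensionality.
Set Implicit Arguments. Unset Strict Implicit. Unset Printing Implicit Defensive.
Import Order.TTheory GRing.Theory Num.Theory.

Section Helpers.
Local Open Scope ring_scope.

Definition ext (c : seq bool) (t : int) : bool :=
  nth false c (absz (t %% Posz (size c))%Z).
Definition wseq (k : nat) (s : int -> bool) (t : int) : seq bool :=
  [seq s (t + Posz j) | j <- iota 0 k].

Lemma val_mktuple (T : Type) m (F : nat -> T) :
  val [tuple F i | i < m] = map F (iota 0 m).
Proof. by rewrite /= -val_enum_ord -map_comp. Qed.

Lemma val_window m s t : val (window m s t) = wseq m s t.
Proof. by rewrite /window (val_mktuple m (fun i => s (t + Posz i))). Qed.

Lemma size_wseq k s t : size (wseq k s t) = k.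
Proof. by rewrite size_map size_iota. Qed.

Lemma nth_wseq k s t j b : (j < k)%N -> nth b (wseq k s t) j = s (t + Posz j).
Proof. by move=> hj; rewrite (nth_map 0%N) ?size_iota // nth_iota. Qed.

Lemma period_natmul s p : is_period s p -> forall n t, s (t + Posz (n * p)) = s t.
Proof.
move=> hp; elim=> [|n IH] t; first by rewrite mul0n addr0.
by rewrite mulSnr PoszD addrA hp.
Qed.

Lemma period_intmul s p : is_period s p -> forall (z : int) t, s (t + z * Posz p) = s t.
Proof.
move=> hp [n|n] t; first by rewrite -PoszM period_natmul.
rewrite -[LHS](period_natmul hp n.+1 (t + Negz n * Posz p)).
by rewrite NegzE PoszM mulNr addrNK.
Qed.

Lemma period_mod s p : is_period s p -> forall t, s t = s (t %% Posz p)%Z.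
Proof.
move=> hp t; rewrite {1}(divz_eq t (Posz p)) addrC.
by rewrite period_intmul.
Qed.

Lemma ext_period c : is_period (ext c) (size c).
Proof. by move=> t; rewrite /ext modzDr. Qed.

Lemma ext_nat c n : ext c (Posz n) = nth false c (n %% size c)%N.
Proof. by rewrite /ext modz_nat. Qed.

Lemma ext_lt c j : (j < size c)%N -> ext c (Posz j) = nth false c j.
Proof. by move=> h; rewrite ext_nat modn_small. Qed.

Lemma nth_rot (T : Type) (x0 : T) i (c : seq T) j : (i <= size c)%N -> (j < size c)%N ->
  nth x0 (rot i c) j = nth x0 c ((j + i) %% size c)%N.
Proof.
move=> hi hj; rewrite /rot nth_cat size_drop.
case: ltnP => h.
  rewrite nth_drop modn_small; [by rewrite addnC | lia].
rewrite nth_take; last by lia.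
have -> : (j + i = j - (size c - i) + size c)%N by lia.
rewrite modnDr modn_small //; lia.
Qed.

Lemma absz_mod t n : (0 < n)%N -> Posz (absz (t %% Posz n)%Z) = (t %% Posz n)%Z.
Proof. move=> hn. rewrite gez0_abs. by []. rewrite modz_ge0 //. by rewrite eqz_nat -lt0n. Qed.

Lemma absz_mod_lt t n : (0 < n)%N -> (absz (t %% Posz n)%Z < n)%N.
Proof. by move=> hn; rewrite -ltz_nat absz_mod // ltz_pmod. Qed.

Lemma ext_rot c i t : (i <= size c)%N -> ext (rot i c) t = ext c (t + Posz i).
Proof.
move=> hi; case: (posnP (size c)) => hn.
  by rewrite (size0nil hn) /ext /rot /= !nth_nil.
rewrite /ext size_rot nth_rot // ?absz_mod_lt //; congr nth.
have H : Posz ((absz (t %% Posz (size c))%Z + i) %% size c)%N = Posz (absz ((t + Posz i) %% Posz (size c))%Z).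
  by rewrite -modz_nat PoszD absz_mod // modzDml absz_mod.
by case: H.
Qed.

Lemma ext_mod c t : (0 < size c)%N -> ext c t = ext c (Posz (absz (t %% Posz (size c))%Z)).
Proof. by move=> hn; rewrite absz_mod // -(period_mod (@ext_period c)). Qed.

Lemma ext_modeq c t1 t2 : (t1 %% Posz (size c) = t2 %% Posz (size c))%Z -> ext c t1 = ext c t2.
Proof. by rewrite /ext => ->. Qed.

Lemma cycle_word_ext c : cycle_word (ext c) (size c) = c.
Proof.
apply: (@eq_from_nth _ false); first by rewrite size_map size_iota.
move=> j; rewrite size_map size_iota => hj.
rewrite (nth_map 0%N); last by rewrite size_iota.
by rewrite nth_iota // add0n ext_lt.
Qed.

Lemma s_eq_ext s p : is_period s p -> (0 < p)%N -> forall t, s t = ext (cycle_word s p) t.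
Proof.
move=> hp p0 t; rewrite /ext size_map size_iota.
have hl := absz_mod_lt t p0.
rewrite (nth_map 0%N); last by rewrite size_iota.
rewrite nth_iota //.
by rewrite add0n absz_mod // -(period_mod hp).
Qed.

Definition sh (s : int -> bool) (d : int) := fun t => s (t + d).

Lemma period_sh s d p : is_period s p <-> is_period (sh s d) p.
Proof.
split=> hp t; rewrite /sh.
  by rewrite addrAC hp.
by have := hp (t - d); rewrite /sh addrAC subrK.
Qed.

Lemma least_sh s d p : least_period s p -> least_period (sh s d) p.
Proof.
move=> [p0 [hp hl]]; split; first exact: p0.
split; first exact: (proj1 (period_sh s d p) hp).
by move=> q hq hq'; apply: (hl q hq); apply: (proj2 (period_sh s d q) hq').
Qed.

Lemma least_uniq s p q : least_period s p -> least_period s q -> p = q.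
Proof.
move=> [p0 [hp hlp]] [q0 [hq hlq]].
case: (ltngtP p q) => // h.
  by case: (hlq p) => //; rewrite p0.
by case: (hlp q) => //; rewrite q0.
Qed.

Lemma ext_least c : is_cycle c -> least_period (ext c) (size c).
Proof.
case/andP=> n0 /allP hrot; split=> //; split; first exact: ext_period.
move=> q /andP [q0 qn] hq.
have : rot q c != c by apply: hrot; rewrite mem_iota; move: q0 qn; clear; lia.
case/negP; apply/eqP; apply: (@eq_from_nth _ false); first by rewrite size_rot.
move=> j; rewrite size_rot => hj.
have qle : (q <= size c)%N by apply: ltnW.
by rewrite -ext_lt ?size_rot // (ext_rot _ qle) hq ext_lt.
Qed.

Lemma same_cycle_ext u v : same_cycle u v ->
  [/\ (0 < size u)%N, size v = size u & exists d, forall t, ext v t = ext u (t + d)].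
Proof.
case/hasP=> i; rewrite mem_iota add0n => /andP [_ hi] /eqP <-.
split; [by move: hi; clear; lia | by rewrite size_rot | exists (Posz i) => t; apply: ext_rot; exact: ltnW].
Qed.

Lemma ext_same_cycle u v : (0 < size u)%N -> size v = size u ->
  (exists d, forall t, ext v t = ext u (t + d)) -> same_cycle u v.
Proof.
move=> n0 hs [d hd]; apply/hasP; exists (absz (d %% Posz (size u))%Z).
  by rewrite mem_iota add0n absz_mod_lt.
apply/eqP; apply: (@eq_from_nth _ false); first by rewrite size_rot.
move=> j; rewrite size_rot => hj.
have hle : (absz (d %% Posz (size u))%Z <= size u)%N by apply: ltnW; apply: absz_mod_lt.
rewrite -ext_lt ?size_rot // (ext_rot _ hle) -ext_lt ?hs // hd absz_mod //.
by apply: ext_modeq; rewrite modzDmr.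
Qed.

Lemma same_cycle_refl u : (0 < size u)%N -> same_cycle u u.
Proof. by move=> n0; apply: ext_same_cycle => //; exists 0 => t; rewrite addr0. Qed.


End Helpers.

Section H2.
Local Open Scope ring_scope.

Lemma wseq_ext_mod k c t : (0 < size c)%N ->
  wseq k (ext c) t = wseq k (ext c) (Posz (absz (t %% Posz (size c))%Z)).
Proof.
move=> n0; apply/eq_map => j; apply: ext_modeq.
by rewrite absz_mod // modzDml.
Qed.

Lemma Omega_k_eq k c : Omega_k k c = [seq wseq k (ext c) (Posz i) | i <- iota 0 (size c)].
Proof.
apply/eq_map => i; apply/eq_map => j.
by rewrite -PoszD ext_nat.
Qed.

Lemma wseq_mem k c t : (0 < size c)%N -> wseq k (ext c) t \in Omega_k k c.
Proof.
move=> n0; rewrite Omega_k_eq wseq_ext_mod //; apply: map_f.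
by rewrite mem_iota add0n absz_mod_lt.
Qed.

Lemma Omega_k_inv k c v : v \in Omega_k k c ->
  exists i, (i < size c)%N /\ v = wseq k (ext c) (Posz i).
Proof.
rewrite Omega_k_eq => /mapP [i]; rewrite mem_iota add0n => /andP [_ hi] ->.
by exists i.
Qed.

Lemma wseq_lbit m s t : lbit m (wseq m.+1 s t) = wseq m s (t + 1).
Proof.
rewrite /lbit size_wseq subSnn /wseq /= drop0.
rewrite (iotaDl 1 0 m) -map_comp; apply/eq_map => j /=.
by rewrite PoszD addrA.
Qed.

Lemma wseq_rcons m s t : wseq m.+1 s t = rcons (wseq m s t) (s (t + Posz m)).
Proof. by rewrite /wseq -addn1 iotaD map_cat cats1. Qed.

Lemma wseq_take m s t : wseq m s t = take m (wseq m.+1 s t).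
Proof. by rewrite wseq_rcons -cats1 take_size_cat // size_wseq. Qed.

Lemma step_window m (f : m.-tuple bool -> bool) s t : generates f s ->
  fsr_step f (window m s t) = window m s (t + 1).
Proof.
move=> gen; apply: val_inj.
rewrite /fsr_step (val_mktuple m (fun i => nth (f (window m s t)) (window m s t) i.+1)).
rewrite val_window /wseq; apply/eq_in_map => j; rewrite mem_iota add0n => /andP [_ hj].
rewrite val_window; case: (ltnP j.+1 m) => h.
  by rewrite nth_wseq // intS addrA.
rewrite nth_default ?size_wseq // -gen.
have -> : m = j.+1 by apply/eqP; rewrite eqn_leq h hj.
by rewrite intS addrA.
Qed.

Lemma window_sh m s d t : window m (sh s d) t = window m s (t + d).
Proof.
apply: val_inj; rewrite !val_window; apply/eq_map => j.
by rewrite /sh addrAC.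
Qed.

Lemma gen_sh m (f : m.-tuple bool -> bool) s d : generates f s -> generates f (sh s d).
Proof.
move=> gen t; rewrite window_sh -gen /sh.
by rewrite addrAC.
Qed.

Lemma forward m (f : m.-tuple bool -> bool) s1 s2 a b :
  generates f s1 -> generates f s2 -> window m s1 a = window m s2 b ->
  forall n : nat, window m s1 (a + Posz n) = window m s2 (b + Posz n).
Proof.
move=> g1 g2 h; elim=> [|n IH]; first by rewrite !addr0.
have -> : Posz n.+1 = Posz n + 1 by rewrite -addn1.
by rewrite !addrA -(step_window _ g1) -(step_window _ g2) IH.
Qed.

Lemma window_head m s t : (0 < m)%N -> nth false (val (window m s t)) 0 = s t.
Proof. by move=> m0; rewrite val_window nth_wseq // addr0. Qed.

Lemma per_trick_fwd s1 s2 p1 p2 a b : is_period s1 p1 -> is_period s2 p2 ->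
  (0 < p1)%N -> (0 < p2)%N ->
  (forall n : nat, s1 (a + Posz n) = s2 (b + Posz n)) -> forall t, s1 (a + t) = s2 (b + t).
Proof.
move=> h1 h2 q1 q2 h t.
set N := (absz t * p1 * p2)%N.
have e1 : s1 (a + t) = s1 (a + t + Posz ((absz t * p2) * p1)) by rewrite period_natmul.
have e2 : s2 (b + t) = s2 (b + t + Posz ((absz t * p1) * p2)) by rewrite period_natmul.
have hk : (absz t <= N)%N by rewrite /N -mulnA leq_pmulr // muln_gt0 q1 q2.
have hN : 0 <= t + Posz N by move: hk; clear; lia.
rewrite e1 e2 (mulnAC _ p2) -/N -!addrA -(gez0_abs hN).
exact: h.
Qed.

Lemma per_trick_bwd s1 s2 p1 p2 a b : is_period s1 p1 -> is_period s2 p2 ->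
  (0 < p1)%N -> (0 < p2)%N ->
  (forall n : nat, s1 (a - Posz n) = s2 (b - Posz n)) -> forall t, s1 (a + t) = s2 (b + t).
Proof.
move=> h1 h2 q1 q2 h t.
set N := (absz t * p1 * p2)%N.
have hk : (absz t <= N)%N by rewrite /N -mulnA leq_pmulr // muln_gt0 q1 q2.
have hN : t <= Posz N by move: hk; clear; lia.
have ea : a + t = a - Posz (absz (Posz N - t)) + Posz N by lia.
have eb : b + t = b - Posz (absz (Posz N - t)) + Posz N by lia.
have f1 : forall x, s1 (x + Posz N) = s1 x.
  by move=> x; rewrite /N (mulnAC _ p1) (period_natmul h1).
have f2 : forall x, s2 (x + Posz N) = s2 x.
  by move=> x; rewrite /N (period_natmul h2).
rewrite ea eb f1 f2.
exact: h.
Qed.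

End H2.

Section H3.
Local Open Scope ring_scope.

Lemma least_exists s : forall p, (0 < p)%N -> is_period s p -> exists q, least_period s q.
Proof.
move=> p; elim/ltn_ind: p => p IH p0 hp.
case: (classic (exists q, (0 < q < p)%N /\ is_period s q)) => [[q [hq hq']]|hn].
  by case/andP: hq => q0 qp; apply: (IH q).
exists p; split=> //; split=> // q hq hq'; apply: hn; by exists q.
Qed.

Lemma least_is_cycle s p : least_period s p -> is_cycle (cycle_word s p).
Proof.
move=> [p0 [hp hl]]; rewrite /is_cycle size_map size_iota p0 /=.
apply/allP => q; rewrite mem_iota => hq; apply/negP => /eqP hr.
have hq2 : (0 < q < p)%N by move: hq p0; clear; lia.
apply: (hl q hq2) => t.
have hqle : (q <= size (cycle_word s p))%N by rewrite size_map size_iota; lia.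
by rewrite !(s_eq_ext hp p0) -(ext_rot _ hqle) hr.
Qed.

Lemma gen_from_nat m (f : m.-tuple bool -> bool) s N : is_period s N -> (0 < N)%N ->
  (forall n : nat, s (Posz n + Posz m) = f (window m s (Posz n))) -> generates f s.
Proof.
move=> hp n0 h t.
set k := absz t.
have hk : (k <= k * N)%N by rewrite leq_pmulr.
have h0 : 0 <= t + Posz (k * N) by move: hk; rewrite /k; clear; lia.
have e : window m s t = window m s (t + Posz (k * N)).
  apply: val_inj; rewrite !val_window; apply/eq_map => j.
  by rewrite addrAC (period_natmul hp).
rewrite e -(period_natmul hp k (t + Posz m)) addrAC -(gez0_abs h0).
exact: h.
Qed.

Lemma orbit_seq m (f : m.-tuple bool -> bool) (m0 : (0 < m)%N)
  (inj : injective (fsr_step f)) (x : m.-tuple bool) :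
  exists s, [/\ generates f s, window m s 0 = x & exists N, (0 < N)%N /\ is_period s N].
Proof.
set F := fsr_step f.
set N := order F x.
have N0 : (0 < N)%N by apply: order_gt0.
pose u n := nth false (val (iter n F x)) 0.
have nthF : forall y j, (j.+1 < m)%N -> nth false (val (F y)) j = nth false (val y) j.+1.
  move=> y j hj; rewrite /F /fsr_step (val_mktuple m (fun i => nth (f y) y i.+1)).
  rewrite (nth_map 0%N) ?size_iota; last by lia.
  rewrite nth_iota; last by lia.
  by rewrite add0n (set_nth_default false) // size_tuple.
have nthL : forall y, nth false (val (F y)) m.-1 = f y.
  move=> y; rewrite /F /fsr_step (val_mktuple m (fun i => nth (f y) y i.+1)).
  rewrite (nth_map 0%N) ?size_iota; last by lia.
  rewrite nth_iota; last by lia.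
  by rewrite add0n nth_default // size_tuple; lia.
have hb : forall j n, (j < m)%N -> nth false (val (iter n F x)) j = u (n + j)%N.
  elim=> [|j IH] n hj; first by rewrite addn0.
  by rewrite -nthF // -iterS IH ?addSnnS //; lia.
have hper : forall n, u (n + N)%N = u n.
  by move=> n; rewrite /u iterD iter_order.
pose s t := u (absz (t %% Posz N)%Z).
have s_nat : forall n : nat, s (Posz n) = u n.
  move=> n; rewrite /s modz_nat /= {2}(divn_eq n N).
  elim: (n %/ N)%N => [|k IH]; first by rewrite mul0n add0n.
  by rewrite mulSnr addnAC hper.
have win : forall n : nat, window m s (Posz n) = iter n F x.
  move=> n; apply: val_inj; rewrite val_window.
  apply: (@eq_from_nth _ false); first by rewrite size_wseq size_tuple.
  move=> j; rewrite size_wseq => hj.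
  by rewrite nth_wseq // -PoszD s_nat hb.
have sper : is_period s N by move=> t; rewrite /s modzDr.
exists s; split.
- apply: (gen_from_nat sper N0) => n.
  rewrite -PoszD s_nat win -nthL -iterS hb; last by lia.
  congr u; lia.
- exact: (win 0%N).
- by exists N.
Qed.

End H3.

Section H4.
Local Open Scope ring_scope.

Definition Lst m (C : seq (seq bool)) : seq (seq bool) :=
  [seq wseq m (ext (nth [::] C i)) (Posz k) | i <- iota 0 (size C), k <- iota 0 (size (nth [::] C i))].

Lemma size_L m C : size (Lst m C) = (\sum_(c <- C) per c)%N.
Proof.
rewrite size_allpairs_dep.
rewrite (eq_map (fun i => size_iota 0 (size (nth [::] C i)))).
rewrite (map_comp size (nth [::] C)) -/(mkseq (nth [::] C) (size C)) mkseq_nth.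
by rewrite sumnE big_map.
Qed.

Lemma mem_L m C c k : c \in C -> (k < size c)%N -> wseq m (ext c) (Posz k) \in Lst m C.
Proof.
move=> hc hk.
have hi : (index c C < size C)%N by rewrite index_mem.
have hc' : nth [::] C (index c C) = c by rewrite nth_index.
move: hk; rewrite -hc' => hk.
apply: (@allpairs_f_dep _ (fun=> nat) _ (fun i k => wseq m (ext (nth [::] C i)) (Posz k))).
  by rewrite mem_iota.
by rewrite mem_iota.
Qed.

Lemma mem_L_int m C c t : c \in C -> (0 < size c)%N -> wseq m (ext c) t \in Lst m C.
Proof.
by move=> hc n0; rewrite wseq_ext_mod //; apply: mem_L => //; apply: absz_mod_lt.
Qed.

Lemma L_inv m C v : v \in Lst m C ->
  exists c k, [/\ c \in C, (k < size c)%N & v = wseq m (ext c) (Posz k)].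
Proof.
case/allpairsPdep => i [k [hi hk ->]].
exists (nth [::] C i), k; split=> //.
  by apply: mem_nth; move: hi; rewrite mem_iota.
by move: hk; rewrite mem_iota.
Qed.

Definition agree m (C : seq (seq bool)) := forall c1 c2, c1 \in C -> c2 \in C ->
  forall a b : int, wseq m (ext c1) a = wseq m (ext c2) b -> forall t, ext c1 (a + t) = ext c2 (b + t).

Lemma core_same c1 c2 a b : is_cycle c1 -> is_cycle c2 ->
  (forall t, ext c1 (a + t) = ext c2 (b + t)) -> same_cycle c1 c2.
Proof.
move=> h1 h2 H.
have E : ext c2 = sh (ext c1) (a - b).
  apply: functional_extensionality => t; rewrite /sh.
  have := H (t - b); have -> : b + (t - b) = t by lia.
  move=> <-.
  congr ext; lia.
have hs : size c1 = size c2.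
  apply: least_uniq (ext_least h2); rewrite E; exact: least_sh (ext_least h1).
apply: ext_same_cycle => //; first by case/andP: h1.
by exists (a - b) => t; rewrite E.
Qed.

Lemma core_k c k1 k2 : is_cycle c -> (k1 < size c)%N -> (k2 < size c)%N ->
  (forall t, ext c (Posz k1 + t) = ext c (Posz k2 + t)) -> k1 = k2.
Proof.
move=> hc.
wlog : k1 k2 / (k1 <= k2)%N.
  move=> W h1 h2 H; case: (leqP k1 k2) => hle; first exact: W.
  by symmetry; apply: W => //; exact: ltnW.
move=> hle h1 h2 H; case: (ltngtP k1 k2) => // hlt; last by lia.
have [_ [_ hl]] := ext_least hc.
exfalso; apply: (hl (k2 - k1)%N); first by lia.
move=> t; have := H (t - Posz k1); have -> : Posz k1 + (t - Posz k1) = t by lia.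
move=> ->.
congr ext; lia.
Qed.

Lemma uniq_L m C : cycle_set C -> agree m C -> uniq (Lst m C).
Proof.
move=> [hcyc hdist] ag.
apply: allpairs_uniq_dep; [exact: iota_uniq | by move=> i _; exact: iota_uniq |].
move=> p1 p2 /allpairsPdep [i1 [k1 [hi1 hk1 ->]]] /allpairsPdep [i2 [k2 [hi2 hk2 ->]]] /= heq.
move: hi1 hi2 hk1 hk2; rewrite !mem_iota !add0n /= => hi1 hi2 hk1 hk2.
have c1C : nth [::] C i1 \in C by apply: mem_nth.
have c2C : nth [::] C i2 \in C by apply: mem_nth.
have H := ag _ _ c1C c2C _ _ heq.
have cy1 : is_cycle (nth [::] C i1) by apply: (allP hcyc).
have cy2 : is_cycle (nth [::] C i2) by apply: (allP hcyc).
have ei : i1 = i2 by apply: hdist => //; apply: core_same cy1 cy2 H.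
subst i2.
have ek : k1 = k2 by apply: (core_k cy1).
by subst k2.
Qed.

Definition Tl m := [seq tval x | x : m.-tuple bool].

Lemma size_Tl m : size (Tl m) = (2 ^ m)%N.
Proof. by rewrite size_map -cardE card_tuple card_bool. Qed.

Lemma uniq_Tl m : uniq (Tl m).
Proof. by rewrite map_inj_uniq ?enum_uniq //; exact: val_inj. Qed.

Lemma mem_Tl m v : size v = m -> v \in Tl m.
Proof.
move=> hv; have hv' : size v == m by apply/eqP.
by apply/mapP; exists (Tuple hv'); rewrite ?mem_enum.
Qed.

Lemma coverage_size m C : uniq (Lst m C) ->
  ((forall x : m.-tuple bool, tval x \in Lst m C) <-> size (Lst m C) = (2 ^ m)%N).
Proof.
move=> uL.
have LT : {subset Lst m C <= Tl m}.
  by move=> v /L_inv [c [k [_ _ ->]]]; apply: mem_Tl; rewrite size_wseq.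
split=> [cov | hs].
  rewrite -size_Tl; apply: perm_size; apply: uniq_perm => // [|v].
    exact: uniq_Tl.
  apply/idP/idP; first exact: LT.
  by case/mapP => x _ ->.
have [_ eq] := uniq_min_size uL LT (eq_leq (etrans (size_Tl m) (esym hs))).
by move=> x; rewrite eq; apply: map_f; rewrite mem_enum.
Qed.

End H4.

Section H5.
Local Open Scope ring_scope.

Lemma dir1 C m (f : m.-tuple bool -> bool) : cycle_set C -> (0 < m)%N ->
  nonsingular f -> Omega_eq f C ->
  (\sum_(c <- C) per c)%N = (2 ^ m)%N /\
  {in flatten [seq Omega_k m.+1 c | c <- C] &, injective (lbit m)}.
Proof.
move=> hC m0 [G FG GF] hO.
have Finj : injective (fsr_step f) := can_inj FG.
have cyc : forall c, c \in C -> is_cycle c := fun c hc => allP hC.1 c hc.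
have pos : forall c, c \in C -> (0 < size c)%N by move=> c /cyc /andP [].
have GEN : forall c, c \in C -> generates f (ext c).
  move=> c hc.
  have : in_Omega f c.
    apply/(hO c (cyc c hc)); apply/hasP; exists c => //; exact: same_cycle_refl (pos c hc).
  case=> s [p [gs [lp sc]]].
  have [_ _ [d hd]] := same_cycle_ext sc.
  have E : ext c = sh s d.
    by apply: functional_extensionality => t; rewrite hd /sh -(s_eq_ext lp.2.1 lp.1).
  rewrite E; exact: gen_sh.
have AG : agree m C.
  move=> c1 c2 h1 h2 a b hw.
  have hwin : window m (ext c1) a = window m (ext c2) b by apply: val_inj; rewrite !val_window.
  have fw := forward (GEN _ h1) (GEN _ h2) hwin.
  apply: (per_trick_fwd (ext_period c1) (ext_period c2) (pos _ h1) (pos _ h2)) => n.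
  have := congr1 (fun w => nth false (val w) 0) (fw n).
  by rewrite /= !window_head.
have uL := uniq_L hC AG.
have COV : forall x : m.-tuple bool, tval x \in Lst m C.
  move=> x; have [s [gs wx [N [N0 hN]]]] := orbit_seq m0 Finj x.
  have [p lp] := least_exists N0 hN.
  have cw := least_is_cycle lp.
  have hin : in_Omega f (cycle_word s p).
    exists s, p; split=> //; split=> //; apply: same_cycle_refl.
    by rewrite size_map size_iota; exact: lp.1.
  have /hasP [c hc sc] := proj1 (hO _ cw) hin.
  have [_ _ [d hd]] := same_cycle_ext sc.
  have -> : tval x = wseq m (ext c) (- d).
    rewrite -wx val_window; apply/eq_map => j.
    rewrite hd -(s_eq_ext lp.2.1 lp.1); congr s; lia.
  by apply: mem_L_int => //; exact: pos.
split.
  by rewrite -(size_L m C); apply/(coverage_size uL).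
move=> v1 v2 /flatten_mapP [c1 h1 hv1] /flatten_mapP [c2 h2 hv2] hl.
have [k1 [_ e1]] := Omega_k_inv hv1.
have [k2 [_ e2]] := Omega_k_inv hv2.
rewrite e1 e2 in hl *.
have hl' : val (window m (ext c1) (Posz k1 + 1)) = val (window m (ext c2) (Posz k2 + 1)).
  by rewrite !val_window -!wseq_lbit.
rewrite -(step_window _ (GEN _ h1)) -(step_window _ (GEN _ h2)) in hl'.
move/val_inj/Finj: hl' => hw.
have hw' := congr1 val hw; rewrite !val_window in hw'.
by rewrite !wseq_rcons hw' (GEN _ h1) (GEN _ h2) hw.
Qed.

Lemma dir2 C m : cycle_set C -> (0 < m)%N ->
  (\sum_(c <- C) per c)%N = (2 ^ m)%N ->
  {in flatten [seq Omega_k m.+1 c | c <- C] &, injective (lbit m)} ->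
  exists f : m.-tuple bool -> bool, nonsingular f /\ Omega_eq f C.
Proof.
move=> hC m0 hsum hinj.
have cyc : forall c, c \in C -> is_cycle c := fun c hc => allP hC.1 c hc.
have pos : forall c, c \in C -> (0 < size c)%N by move=> c /cyc /andP [].
have step : forall c1 c2, c1 \in C -> c2 \in C -> forall a b,
    wseq m (ext c1) (a + 1) = wseq m (ext c2) (b + 1) -> wseq m (ext c1) a = wseq m (ext c2) b.
  move=> c1 c2 h1 h2 a b hw.
  have m1 : wseq m.+1 (ext c1) a \in flatten [seq Omega_k m.+1 c | c <- C].
    by apply/flatten_mapP; exists c1 => //; apply: wseq_mem; exact: pos.
  have m2 : wseq m.+1 (ext c2) b \in flatten [seq Omega_k m.+1 c | c <- C].
    by apply/flatten_mapP; exists c2 => //; apply: wseq_mem; exact: pos.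
  have e : wseq m.+1 (ext c1) a = wseq m.+1 (ext c2) b.
    by apply: hinj => //; rewrite !wseq_lbit.
  by rewrite (wseq_take m (ext c1) a) (wseq_take m (ext c2) b) e.
have AG : agree m C.
  move=> c1 c2 h1 h2 a b hw.
  have bw : forall n : nat, wseq m (ext c1) (a - Posz n) = wseq m (ext c2) (b - Posz n).
    elim=> [|n IH]; first by rewrite !subr0.
    apply: step => //.
    have -> : a - Posz n.+1 + 1 = a - Posz n by lia.
    have -> : b - Posz n.+1 + 1 = b - Posz n by lia.
    exact: IH.
  apply: (per_trick_bwd (ext_period c1) (ext_period c2) (pos _ h1) (pos _ h2)) => n.
  have := congr1 (fun w => nth false w 0%N) (bw n).
  by rewrite /= !nth_wseq // !addr0.
have uL := uniq_L hC AG.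
have COV := proj2 (coverage_size uL) (etrans (size_L m C) hsum).
pose f (x : m.-tuple bool) := has (fun c => has (fun k =>
   (wseq m (ext c) (Posz k) == tval x) && ext c (Posz k + Posz m)) (iota 0 (size c))) C.
have fspec : forall c, c \in C -> forall t, f (window m (ext c) t) = ext c (t + Posz m).
  move=> c hc t.
  set k := absz (t %% Posz (size c))%Z.
  have hk : (k < size c)%N := absz_mod_lt t (pos c hc).
  have ew : tval (window m (ext c) t) = wseq m (ext c) (Posz k).
    by rewrite val_window wseq_ext_mod //; exact: pos.
  have ee : ext c (t + Posz m) = ext c (Posz k + Posz m).
    by apply: ext_modeq; rewrite /k absz_mod ?modzDml //; exact: pos.
  rewrite ee; case E: (ext c (Posz k + Posz m)).
    apply/hasP; exists c => //; apply/hasP; exists k; first by rewrite mem_iota.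
    by rewrite ew eqxx E.
  apply/negP => /hasP [c' hc' /hasP [k' _ /andP [/eqP hw E']]].
  have := AG c' c hc' hc _ _ (etrans hw ew) (Posz m).
  by rewrite E' E.
have GEN : forall c, c \in C -> generates f (ext c) by move=> c hc t; rewrite fspec.
have Finj : injective (fsr_step f).
  move=> x y hxy.
  have [c1 [k1 [h1 _ ex]]] := L_inv (COV x).
  have [c2 [k2 [h2 _ ey]]] := L_inv (COV y).
  have ex' : x = window m (ext c1) (Posz k1) by apply: val_inj; rewrite val_window.
  have ey' : y = window m (ext c2) (Posz k2) by apply: val_inj; rewrite val_window.
  rewrite ex' ey' in hxy *.
  rewrite (step_window _ (GEN _ h1)) (step_window _ (GEN _ h2)) in hxy.
  have hv := congr1 val hxy; rewrite !val_window in hv.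
  have H := AG _ _ h1 h2 _ _ hv.
  apply: val_inj; rewrite !val_window; apply/eq_map => j.
  have := H (Posz j - 1).
  have -> : Posz k1 + 1 + (Posz j - 1) = Posz k1 + Posz j by lia.
  have -> : Posz k2 + 1 + (Posz j - 1) = Posz k2 + Posz j by lia.
  by [].
exists f; split; first exact: injF_bij Finj.
move=> c cc; split.
  case=> s [p [gs [lp sc]]].
  have [c' [k [hc' hk ex]]] := L_inv (COV (window m s 0)).
  have hw : window m s 0 = window m (ext c') (Posz k) by apply: val_inj; apply: etrans ex _; rewrite val_window.
  have fw := forward gs (GEN _ hc') hw.
  have all0 : forall t, s (0 + t) = ext c' (Posz k + t).
    apply: (per_trick_fwd lp.2.1 (ext_period c') lp.1 (pos _ hc')) => n.
    have := congr1 (fun w => nth false (val w) 0) (fw n).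
    by rewrite /= !window_head.
  have E : s = sh (ext c') (Posz k).
    apply: functional_extensionality => t; rewrite /sh.
    by have := all0 t; rewrite add0r => ->; rewrite addrC.
  have ep : p = size c'.
    apply: (least_uniq lp); rewrite E; exact: least_sh (ext_least (cyc _ hc')).
  have [_ hsz [d hd]] := same_cycle_ext sc.
  apply/hasP; exists c' => //.
  apply: ext_same_cycle; first by case/andP: cc.
    by rewrite hsz size_map size_iota ep.
  exists (- d - Posz k) => t.
  rewrite hd -(s_eq_ext lp.2.1 lp.1) E /sh; congr ext; lia.
case/hasP => c' hc' sc.
have [n0 hsz [d hd]] := same_cycle_ext sc.
exists (ext c), (size c); split.
  have E : ext c = sh (ext c') (- d).
    by apply: functional_extensionality => t; rewrite /sh hd; congr ext; lia.
  rewrite E; exact: gen_sh (GEN _ hc').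
split; first exact: ext_least cc.
rewrite cycle_word_ext; exact: (same_cycle_refl n0).
Qed.

End H5.

Unset Implicit Arguments.
Theorem lemma4 (C : seq (seq bool)) (m : nat) :
  cycle_set C -> (1 <= m)%N ->
  ((exists f : m.-tuple bool -> bool, nonsingular f /\ Omega_eq f C) <->
   ((\sum_(c <- C) per c)%N = 2 ^ m /\
    {in flatten [seq Omega_k m.+1 c | c <- C] &, injective (lbit m)})).
Proof.
move=> hC hm; split.
  by case=> f [ns hO]; exact: (dir1 hC hm ns hO).
by case=> hs hi; exact: (dir2 hC hm hs hi).
Qed.
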